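(* For $j=1,2$ let $K_j=\mathbb Q(u_j)$ be a totally real quartic number field, $p_j\in\mathbb Q[t]$ the minimal polynomial of $u_j$, $\mathcal O_{K_j}$ its ring of integers, and $\beta_j$ a $\mathbb Z$-basis of $\mathcal O_{K_j}$ (identifying $\mathcal O_{K_j}$ with $\mathbb Z^4$ and $K_j$ with $\mathbb Q^4$). For $x\in K_j$ let $m_j(x)\in \mathrm{GL}_4(\mathbb Q)$ (for $x\neq0$) be the matrix of multiplication by $x$ in the basis $\beta_j$, let $\tilde T_j:=\mathrm{span}_{\mathbb R}\{m_j(1),m_j(u_j),m_j(u_j^2),m_j(u_j^3)\}\cap\mathrm{GL}_4(\mathbb R)$ (an $\mathbb R$-split torus) and $T_j$ its identity component. Choose three multiplicatively independent units of $\mathcal O_{K_j}$ with multiplication matrices $A^{(j)}_1,A^{(j)}_2,A^{(j)}_3\in\mathrm{GL}_4(\mathbb Z)\cap\tilde T_j$, let $\Lambda_j$ be the intersection with $T_j$ of the group they generate, and let $\Gamma_j:=\Lambda_j\ltimes\mathbb Z^4\subset G_{T_j}:=T_j\ltimes\mathbb R^4$. If $\Gamma_1$ and $\Gamma_2$ are commensurable, i.e. there exist finite index subgroups $\Gamma_1'\subset\Gamma_1$, $\Gamma_2'\subset\Gamma_2$ and a Lie group isomorphism $\Phi:G_{T_1}\to G_{T_2}$ with $\Phi(\Gamma_1')=\Gamma_2'$, then the splitting fields of $p_1$ and $p_2$ over $\mathbb Q$ are isomorphic.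
   Context: $G_{T_j}=T_j\ltimes\mathbb R^4$ is the semidirect product with $T_j$ acting linearly on $\mathbb R^4$; each $G_{T_j}$ is isomorphic to $\exp(\mathfrak a)\ltimes\mathbb R^4$ with $\mathfrak a$ the traceless diagonal $4\times4$ matrices, and $\Gamma_j$ is a lattice in $G_{T_j}$. *)

(* Defs.v *)
From HB Require Import structures.
From mathcomp Require Import all_boot all_order all_algebra all_field.
From mathcomp Require Import all_classical all_reals all_analysis.
Unset Printing Implicit Defensive.
Import Order.TTheory GRing.Theory Num.Theory.
Import numFieldTopology.Exports numFieldNormedType.Exports.
Local Open Scope classical_set_scope.
Local Open Scope ring_scope.

Definition pevalC (q : {poly rat}) (x : algC) : algC := (map_poly ratr q).[x].

(* p is the minimal polynomial of u over Q, Q(u) is quartic and totally real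
   (all conjugates of u, i.e. all complex roots of p, are real) *)
Definition totally_real_quartic_minpoly (p : {poly rat}) (u : algC) : Prop :=
  [/\ p \is monic, irreducible_poly p, size p = 5%N, root (map_poly ratr p) u
    & forall z : algC, root (map_poly ratr p) z -> z \is Num.real].

Definition in_Qu (u x : algC) : Prop := exists q : {poly rat}, x = pevalC q u.

Definition integralC (x : algC) : Prop :=
  exists q : {poly int}, q \is monic /\ (map_poly (fun z : int => z%:~R) q).[x] = 0.

Definition in_OK (u x : algC) : Prop := in_Qu u x /\ integralC x.

Definition is_Zbasis (u : algC) (b : 'I_4 -> algC) : Prop :=
  [/\ (forall i, in_OK u (b i)),
      (forall x, in_OK u x -> exists c : 'I_4 -> int, x = \sum_i (c i)%:~R * b i)
    & forall c : 'I_4 -> int, \sum_i (c i)%:~R * b i = 0 -> forall i, c i = 0].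

(* M is the matrix of multiplication by x in the basis b (acting on column
   coordinate vectors):  x * b_i = sum_k M k i * b_k *)
Definition is_mult_matrix (b : 'I_4 -> algC) (x : algC) (M : 'M[rat]_4) : Prop :=
  forall i, x * b i = \sum_k ratr (M k i) * b k.

Definition is_unit_OK (u e : algC) : Prop := [/\ in_OK u e, e != 0 & in_OK u e^-1].

Definition mult_indep (e : 'I_3 -> algC) : Prop :=
  forall a : 'I_3 -> int, \prod_i (e i) ^ (a i) = 1 -> forall i, a i = 0.

Definition field_data (p : {poly rat}) (u : algC) (b : 'I_4 -> algC)
  (M : 'I_4 -> 'M[rat]_4) (e : 'I_3 -> algC) (A : 'I_3 -> 'M[rat]_4) : Prop :=
  [/\ totally_real_quartic_minpoly p u /\ is_Zbasis u b,
      (forall k : 'I_4, is_mult_matrix b (u ^+ k) (M k)),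
      (forall i, is_unit_OK u (e i)), mult_indep e
    & forall i, is_mult_matrix b (e i) (A i)].

Definition subfieldC (F : set algC) : Prop :=
  [/\ F 1, (forall x y, F x -> F y -> F (x - y)),
      (forall x y, F x -> F y -> F (x * y)) & (forall x, F x -> F x^-1)].

Definition splitting_fieldC (p : {poly rat}) : set algC :=
  [set x | forall F, subfieldC F ->
     (forall z, root (map_poly ratr p) z -> F z) -> F x].

Definition fields_isomorphic (F1 F2 : set algC) : Prop :=
  exists f : algC -> algC,
    [/\ (forall x, F1 x -> F2 (f x)),
        (forall y, F2 y -> exists2 x, F1 x & f x = y),
        (forall x y, F1 x -> F1 y -> f x = f y -> x = y) /\
        (forall x y, F1 x -> F1 y -> f (x + y) = f x + f y),
        (forall x y, F1 x -> F1 y -> f (x * y) = f x * f y)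
      & f 1 = 1].

Definition mxR (R : realType) (M : 'M[rat]_4) : 'M[R]_4 := map_mx ratr M.

Definition Ttilde (R : realType) (M : 'I_4 -> 'M[rat]_4) : set 'M[R]_4 :=
  [set X | (exists c : 'I_4 -> R, X = \sum_k c k *: mxR R (M k)) /\ X \in unitmx].

Definition Tid (R : realType) (M : 'I_4 -> 'M[rat]_4) : set 'M[R]_4 :=
  connected_component (Ttilde R M) 1%:M.

Definition subgroupGL (R : realType) (H : set 'M[R]_4) : Prop :=
  [/\ (forall X, H X -> X \in unitmx), H 1%:M,
      (forall X Y, H X -> H Y -> H (X *m Y)) & (forall X, H X -> H (invmx X))].

Definition gen_group (R : realType) (S : set 'M[R]_4) : set 'M[R]_4 :=
  [set X | forall H : set 'M[R]_4, subgroupGL R H -> S `<=` H -> H X].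

Definition Lambda (R : realType) (M : 'I_4 -> 'M[rat]_4) (A : 'I_3 -> 'M[rat]_4)
  : set 'M[R]_4 :=
  Tid R M `&` gen_group R (range (fun i => mxR R (A i))).

Definition sdp (R : realType) := ('M[R]_4 * 'cV[R]_4)%type.
Definition sdmul (R : realType) (g h : sdp R) : sdp R := (g.1 *m h.1, g.2 + g.1 *m h.2).
Definition sdone (R : realType) : sdp R := (1%:M, 0).
Definition sdinv (R : realType) (g : sdp R) : sdp R := (invmx g.1, - (invmx g.1 *m g.2)).

Definition GT (R : realType) (M : 'I_4 -> 'M[rat]_4) : set (sdp R) :=
  [set g | Tid R M g.1].

Definition int_vec (R : realType) (v : 'cV[R]_4) : Prop :=
  forall i, exists z : int, v i 0 = z%:~R.

Definition Gamma (R : realType) (M : 'I_4 -> 'M[rat]_4) (A : 'I_3 -> 'M[rat]_4)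
  : set (sdp R) :=
  [set g | Lambda R M A g.1 /\ int_vec R g.2].

Definition is_subgroup (R : realType) (G H : set (sdp R)) : Prop :=
  [/\ H `<=` G, H (sdone R), (forall g h, H g -> H h -> H (sdmul R g h))
    & (forall g, H g -> H (sdinv R g))].

Definition finite_index (R : realType) (G H : set (sdp R)) : Prop :=
  exists (n : nat) (x : 'I_n -> sdp R), (forall i, G (x i)) /\
    forall g, G g -> exists i, exists2 h, H h & g = sdmul R (x i) h.

(* Lie group isomorphism G1 -> G2: a homeomorphic group isomorphism
   (continuous homomorphisms of Lie groups are automatically smooth) *)
Definition lie_group_iso (R : realType) (G1 G2 : set (sdp R)) (Phi : sdp R -> sdp R)
  : Prop :=
  [/\ (forall g, G1 g -> G2 (Phi g)),
      (forall g h, G1 g -> G1 h -> Phi (sdmul R g h) = sdmul R (Phi g) (Phi h)),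
      {within G1, continuous Phi}
    & exists Psi : sdp R -> sdp R,
        [/\ (forall g, G2 g -> G1 (Psi g)),
            (forall g, G1 g -> Psi (Phi g) = g),
            (forall g, G2 g -> Phi (Psi g) = g)
          & {within G2, continuous Psi}]].

Definition commensurable (R : realType) (G1 Gam1 G2 Gam2 : set (sdp R)) : Prop :=
  exists (Gam1' Gam2' : set (sdp R)) (Phi : sdp R -> sdp R),
    [/\ is_subgroup R Gam1 Gam1' /\ finite_index R Gam1 Gam1',
        is_subgroup R Gam2 Gam2', finite_index R Gam2 Gam2',
        lie_group_iso R G1 G2 Phi
      & Phi @` Gam1' = Gam2'].

(* Main.v *)
Require Import Defs.
From HB Require Import structures.
From mathcomp Require Import all_boot all_order all_algebra all_field.
From mathcomp Require Import all_classical all_reals all_analysis.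
From mathcomp Require Import lra.
Import Order.TTheory GRing.Theory Num.Theory.
Import numFieldTopology.Exports numFieldNormedType.Exports.
Local Open Scope classical_set_scope.
Local Open Scope ring_scope.
Set Implicit Arguments.
Unset Strict Implicit.
Lemma Zbasis_Qindep (u : algC) (b : 'I_4 -> algC) : is_Zbasis u b ->
  forall c : 'I_4 -> rat, \sum_i ratr (c i) * b i = 0 -> forall i, c i = 0.
Proof.
case=> _ _ Hind c Hc i.
pose D : int := \prod_j denq (c j).
have D0 : D != 0 by rewrite prodf_seq_neq0; apply/allP => j _; exact: denq_neq0.
pose z j : int := numq (c j) * \prod_(k | k != j) denq (c k).
have zE j : (z j)%:~R = c j * D%:~R :> rat.
  rewrite /z /D [in RHS](bigD1 j) //= intrM numqE intrM mulrA; congr (_ * (_%:~R)); exact: eq_bigl.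
have := Hind z.
have -> : \sum_i (z i)%:~R * b i = (D%:~R : algC) * \sum_i ratr (c i) * b i.
  rewrite mulr_sumr; apply: eq_bigr => k _.
  rewrite mulrA; congr (_ * _).
  by rewrite -[(z k)%:~R]/((z k)%:~R : algC) -(rmorph_int (ratr : {rmorphism rat -> algC})) zE rmorphM rmorph_int mulrC.
move=> /(_ _ i); rewrite Hc mulr0 => /(_ erefl) zi.
have : (z i)%:~R = 0 :> rat by rewrite zi.
by rewrite zE => /eqP; rewrite mulf_eq0 intr_eq0 (negbTE D0) orbF => /eqP.
Qed.

Arguments Zbasis_Qindep {u b}.
Section MultMx.
Variables (u : algC) (b : 'I_4 -> algC).
Hypothesis Hb : is_Zbasis u b.

Lemma mm_unique x X Y : is_mult_matrix b x X -> is_mult_matrix b x Y -> X = Y.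
Proof.
move=> HX HY; apply/matrixP => k i.
have := Zbasis_Qindep Hb (fun k => X k i - Y k i).
move=> H; apply/eqP; rewrite -subr_eq0; apply/eqP; apply: H.
have := HX i; rewrite HY => E.
under eq_bigr => j _ do rewrite rmorphB mulrBl.
by rewrite sumrB E subrr.
Qed.

Lemma b_neq0 i : b i != 0.
Proof.
apply/eqP => bi0.
have H : \sum_j ratr ((j == i)%:R : rat) * b j = 0.
  rewrite (bigD1 i) //= big1 ?addr0 ?bi0 ?mulr0 // => j /negbTE ->.
  by rewrite rmorph0 mul0r.
have := Zbasis_Qindep Hb _ H i.
by rewrite eqxx => /eqP; rewrite oner_eq0.
Qed.

Lemma mm_one : is_mult_matrix b 1 1%:M.
Proof.
move=> i; rewrite mul1r (bigD1 i) //= big1 ?addr0 ?mxE ?eqxx ?rmorph1 ?mul1r //.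
by move=> j ji; rewrite mxE (negbTE ji) rmorph0 mul0r.
Qed.

Lemma mm_scal q : is_mult_matrix b (ratr q) q%:M.
Proof.
move=> i; rewrite (bigD1 i) //= big1 ?addr0 ?mxE ?eqxx ?mulr1n //.
by move=> j ji; rewrite mxE (negbTE ji) mulr0n rmorph0 mul0r.
Qed.

Lemma mm_add x y X Y : is_mult_matrix b x X -> is_mult_matrix b y Y ->
  is_mult_matrix b (x + y) (X + Y).
Proof.
move=> HX HY i; rewrite mulrDl HX HY -big_split /=; apply: eq_bigr => k _.
by rewrite mxE rmorphD mulrDl.
Qed.

Lemma mm_scale q x X : is_mult_matrix b x X ->
  is_mult_matrix b (ratr q * x) (q *: X).
Proof.
move=> HX i; rewrite -mulrA HX mulr_sumr; apply: eq_bigr => k _.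
by rewrite mxE rmorphM mulrA.
Qed.

Lemma mm_mul x y X Y : is_mult_matrix b x X -> is_mult_matrix b y Y ->
  is_mult_matrix b (x * y) (X *m Y).
Proof.
move=> HX HY i; rewrite -mulrA HY mulr_sumr.
under eq_bigr => l _ do rewrite mulrCA HX mulr_sumr.
rewrite exchange_big /=; apply: eq_bigr => k _.
rewrite mxE rmorph_sum mulr_suml; apply: eq_bigr => l _.
by rewrite rmorphM mulrA [ratr (Y l i) * _]mulrC.
Qed.

Lemma mm_sum (I : finType) (x : I -> algC) (X : I -> 'M[rat]_4) :
  (forall i, is_mult_matrix b (x i) (X i)) ->
  is_mult_matrix b (\sum_i x i) (\sum_i X i).
Proof.
move=> H; elim/big_ind2: _ => //; last by move=> *; apply: mm_add.
move=> i; rewrite mul0r big1 // => k _; by rewrite mxE rmorph0 mul0r.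
Qed.

Lemma mm_poly x X (f : {poly rat}) : is_mult_matrix b x X ->
  is_mult_matrix b (pevalC f x) (horner_mx X f).
Proof.
move=> HX; elim/poly_ind: f => [|f c IH].
  rewrite /pevalC rmorph0 horner0 rmorph0; move=> i.
  by rewrite mul0r big1 // => k _; rewrite mxE rmorph0 mul0r.
rewrite /pevalC rmorphD rmorphM /= map_polyX map_polyC /= hornerMXaddC.
rewrite rmorphD rmorphM /= horner_mx_X horner_mx_C.
apply: mm_add; last exact: mm_scal.
exact: mm_mul.
Qed.

Lemma mm_zero x X : is_mult_matrix b x X -> (x = 0 <-> X = 0).
Proof.
move=> HX; split=> [x0|X0].
  apply: (mm_unique HX); rewrite x0 => i.
  by rewrite mul0r big1 // => k _; rewrite mxE rmorph0 mul0r.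
have := HX 0; rewrite X0 big1 => [/eqP|k _]; last by rewrite mxE rmorph0 mul0r.
by rewrite mulf_eq0 (negbTE (b_neq0 0)) orbF => /eqP.
Qed.

Lemma mm_poly0 x X (f : {poly rat}) : is_mult_matrix b x X ->
  (pevalC f x = 0 <-> horner_mx X f = 0).
Proof. by move=> HX; apply: mm_zero; apply: mm_poly. Qed.

End MultMx.

Lemma pevalC_comp (p q : {poly rat}) x : pevalC (p \Po q) x = pevalC p (pevalC q x).
Proof. by rewrite /pevalC map_comp_poly horner_comp. Qed.

Lemma pevalCM (p q : {poly rat}) x : pevalC (p * q) x = pevalC p x * pevalC q x.
Proof. by rewrite /pevalC rmorphM hornerM. Qed.

Lemma pevalCB (p q : {poly rat}) x : pevalC (p - q) x = pevalC p x - pevalC q x.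
Proof. by rewrite /pevalC rmorphB hornerD hornerN. Qed.

Lemma pevalCX x : pevalC 'X x = x.
Proof. by rewrite /pevalC map_polyX hornerX. Qed.

Lemma pevalCC c x : pevalC c%:P x = ratr c.
Proof. by rewrite /pevalC map_polyC hornerC. Qed.

Lemma irr_dvd (p f : {poly rat}) y : irreducible_poly p ->
  root (map_poly ratr p) y -> pevalC f y = 0 -> p %| f.
Proof.
move=> [sp Hirr] py fy.
have Hg : root (map_poly (ratr : {rmorphism rat -> algC}) (gcdp p f)) y.
  by rewrite gcdp_map root_gcd py; apply/eqP.
have sg : size (gcdp p f) != 1%N.
  apply/negP => /size_poly1P [c c0 cE].
  by move: Hg; rewrite cE map_polyC rootC fmorph_eq0 (negbTE c0).
have := Hirr _ sg (dvdp_gcdl p f) => /eqp_dvdl <-.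
exact: dvdp_gcdr.
Qed.

Lemma root_transfer (p f : {poly rat}) y w : irreducible_poly p ->
  root (map_poly ratr p) y -> pevalC f y = 0 ->
  root (map_poly ratr p) w -> pevalC f w = 0.
Proof.
move=> ip py fy pw; have /dvdpP [k ->] := irr_dvd ip py fy.
by rewrite pevalCM /pevalC (rootP pw) mulr0.
Qed.

Lemma irr_small (p f : {poly rat}) y : irreducible_poly p ->
  root (map_poly ratr p) y -> pevalC f y = 0 -> (size f < size p)%N -> f = 0.
Proof.
move=> ip py fy sf; have d := irr_dvd ip py fy.
apply/eqP; apply: contraTT sf => f0; rewrite -leqNgt; exact: dvdp_leq.
Qed.

Lemma subfield_rat (F : set algC) : subfieldC F -> forall q : rat, F (ratr q).
Proof.
case=> F1 FB FM FV.
have F0 : F 0 by rewrite -(subrr 1); apply: FB.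
have FN x : F x -> F (- x) by move=> Fx; rewrite -sub0r; apply: FB.
have FD x y : F x -> F y -> F (x + y).
  by move=> Fx Fy; rewrite -[y]opprK; apply: FB => //; apply: FN.
have Fn (n : nat) : F n%:R.
  elim: n => [|n IH]; first by [].
  by rewrite mulrS; apply: FD.
have Fz (z : int) : F z%:~R.
  by case: z => n; [exact: Fn|rewrite NegzE mulrNz; apply: FN; exact: Fn].
move=> q; have -> : q = (numq q)%:~R / (denq q)%:~R by rewrite divq_num_den.
rewrite rmorphM fmorphV !rmorph_int; apply: FM => //; exact: FV.
Qed.

Lemma subfield_peval (F : set algC) (f : {poly rat}) x : subfieldC F -> F x ->
  F (pevalC f x).
Proof.
move=> sF Fx; have [F1 FB FM FV] := sF.
have F0 : F 0 by rewrite -(subrr 1); apply: FB.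
have FN y : F y -> F (- y) by move=> Fy; rewrite -sub0r; apply: FB.
have FD y z : F y -> F z -> F (y + z).
  by move=> Fy Fz; rewrite -[z]opprK; apply: FB => //; apply: FN.
elim/poly_ind: f => [|f c IH]; first by rewrite /pevalC rmorph0 horner0.
rewrite /pevalC rmorphD rmorphM /= map_polyX map_polyC /= hornerMXaddC.
by apply: FD; [apply: FM|apply: subfield_rat].
Qed.

Lemma split_subfield (p : {poly rat}) : subfieldC (splitting_fieldC p).
Proof.
split.
- by move=> F [].
- by move=> x y Hx Hy F sF Hr; case: (sF) => _ FB _ _; apply: FB; [apply: Hx|apply: Hy].
- by move=> x y Hx Hy F sF Hr; case: (sF) => _ _ FM _; apply: FM; [apply: Hx|apply: Hy].
- by move=> x Hx F sF Hr; case: (sF) => _ _ _ FV; apply: FV; apply: Hx.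
Qed.

Lemma split_sub (p1 p2 : {poly rat}) :
  (forall w, root (map_poly ratr p1) w -> exists2 z, root (map_poly ratr p2) z &
     exists g : {poly rat}, w = pevalC g z) ->
  splitting_fieldC p1 `<=` splitting_fieldC p2.
Proof.
move=> H x Hx F sF Hr; apply: Hx => // w /H [z /Hr Fz [g ->]].
exact: subfield_peval.
Qed.

Lemma split_eq (p1 p2 g h : {poly rat}) (y u2 : algC) :
  irreducible_poly p1 -> irreducible_poly p2 ->
  root (map_poly ratr p1) y -> root (map_poly ratr p2) u2 ->
  y = pevalC g u2 -> u2 = pevalC h y ->
  splitting_fieldC p1 = splitting_fieldC p2.
Proof.
move=> i1 i2 r1 r2 yE uE; apply/seteqP; split; apply: split_sub.
- move=> w rw; exists (pevalC h w).
    apply/rootP; change (pevalC p2 (pevalC h w) = 0); rewrite -pevalC_comp.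
    apply: (root_transfer i1 r1) rw; rewrite pevalC_comp -uE; exact/rootP.
  exists g; apply/esym; apply/eqP; rewrite -subr_eq0; apply/eqP.
  rewrite -[X in X - _]pevalC_comp -[X in _ - X](pevalCX w) -pevalCB.
  apply: (root_transfer i1 r1) rw; rewrite pevalCB pevalC_comp pevalCX -uE -yE.
  by rewrite subrr.
- move=> z rz; exists (pevalC g z).
    apply/rootP; change (pevalC p1 (pevalC g z) = 0); rewrite -pevalC_comp.
    apply: (root_transfer i2 r2) rz; rewrite pevalC_comp -yE; exact/rootP.
  exists h; apply/esym; apply/eqP; rewrite -subr_eq0; apply/eqP.
  rewrite -[X in X - _]pevalC_comp -[X in _ - X](pevalCX z) -pevalCB.
  apply: (root_transfer i2 r2) rz; rewrite pevalCB pevalC_comp pevalCX -yE -uE.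
  by rewrite subrr.
Qed.

Lemma find_inverse (p1 p2 g : {poly rat}) (u2 : algC) :
  irreducible_poly p1 -> size p1 = 5%N -> root (map_poly ratr p2) u2 ->
  size p2 = 5%N -> root (map_poly ratr p1) (pevalC g u2) ->
  exists h, u2 = pevalC h (pevalC g u2).
Proof.
move=> ip1 s1 r2 s2 r1; set y := pevalC g u2 in r1 *.
pose C : 'M[rat]_4 := \matrix_(i, k) ((g ^+ i) %% p2)`_k.
have p20 : p2 != 0 by rewrite -size_poly_eq0 s2.
have Ey (i : 'I_4) : y ^+ i = \sum_k ratr (C i k) * u2 ^+ k.
  have -> : y ^+ i = pevalC (g ^+ i %% p2) u2.
    rewrite /y /pevalC -horner_exp.
    have -> : map_poly ratr g ^+ i = map_poly (ratr : {rmorphism rat -> algC}) (g ^+ i) by rewrite rmorphXn.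
    rewrite {1}(divp_eq (g ^+ i) p2).
    by rewrite rmorphD rmorphM hornerD hornerM (rootP r2) mulr0 add0r.
  rewrite /pevalC (@horner_coef_wide _ 4).
    by apply: eq_bigr => k _; rewrite coef_map mxE.
  by rewrite size_map_poly -ltnS -s2 ltn_modp.
have swap (a : 'I_4 -> rat) : \sum_i ratr (a i) * y ^+ i =
    \sum_k ratr (\sum_i a i * C i k) * u2 ^+ k.
  under eq_bigr => i _ do rewrite Ey mulr_sumr.
  rewrite exchange_big /=; apply: eq_bigr => k _.
  by rewrite rmorph_sum mulr_suml; apply: eq_bigr => i _; rewrite rmorphM mulrA.
have peval4 (a : 'I_4 -> rat) : pevalC (\poly_(i < 4) a (inord i)) y = \sum_i ratr (a i) * y ^+ i.
  rewrite /pevalC (@horner_coef_wide _ 4).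
    by apply: eq_bigr => i _; rewrite coef_map coef_poly ltn_ord inord_val.
  by rewrite size_map_poly; apply: size_poly.
have Cu : C \in unitmx.
  apply: contraT; rewrite unitmxE unitfE negbK => /det0P [a a0 aC].
  have A0 : \poly_(i < 4) a 0 (inord i) = 0.
    apply: (irr_small ip1 r1); last by rewrite s1; apply: leq_ltn_trans (size_poly _ _) _.
    rewrite (peval4 (fun i => a 0 i)) swap big1 // => k _.
    have := congr1 (fun M : 'M[rat]_(1,4) => M 0 k) aC; rewrite !mxE => ->.
    by rewrite rmorph0 mul0r.
  suff : a = 0 by move/eqP: a0.
  apply/rowP => i.
  by have := congr1 (fun p : {poly rat} => p`_i) A0; rewrite coef_poly ltn_ord coef0 mxE inord_val.
pose j1 : 'I_4 := inord 1.
exists (\poly_(i < 4) invmx C j1 (inord i)).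
rewrite (peval4 (fun i => invmx C j1 i)) swap.
have E k : \sum_i invmx C j1 i * C i k = (j1 == k)%:R.
  by have := congr1 (fun M : 'M[rat]_4 => M j1 k) (mulVmx Cu); rewrite !mxE.
under eq_bigr => k _ do rewrite E.
rewrite (bigD1 j1) //= eqxx rmorph1 mul1r inordK // big1 ?addr0 // => k kj.
by rewrite eq_sym (negbTE kj) rmorph0 mul0r.
Qed.
Lemma rat_in_span (R : realType) (M : 'I_4 -> 'M[rat]_4) (Z : 'M[rat]_4) (c : 'I_4 -> R) :
  mxR R Z = \sum_k c k *: mxR R (M k) -> exists c' : 'I_4 -> rat, Z = \sum_k c' k *: M k.
Proof.
move=> HZ.
pose B : 'M[rat]_(4, 4 * 4) := \matrix_(k < 4) mxvec (M k).
have : (mxvec Z <= B)%MS.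
  rewrite -(map_submx (ratr : {rmorphism rat -> R})).
  apply/submxP; exists (\row_k c k).
  rewrite map_mxvec -/(mxR R Z) HZ mulmx_sum_row linear_sum; apply: eq_bigr => k _.
  by rewrite linearZ /= mxE -map_row rowK map_mxvec.
case/submxP => D E; exists (fun k => D 0 k).
apply: (can_inj mxvecK); rewrite E mulmx_sum_row linear_sum; apply: eq_bigr => k _.
by rewrite linearZ /= rowK.
Qed.
Lemma tid_of_path (R : realType) (M : 'I_4 -> 'M[rat]_4) (f : R -> 'M[R]_4) (a b s0 s1 : R) :
  continuous f -> a <= s0 <= b -> a <= s1 <= b -> f s0 = 1%:M ->
  (forall s, a <= s <= b -> Ttilde R M (f s)) -> Tid R M (f s1).
Proof.
move=> cf h0 h1 f0 HT.
exists (f @` [set` `[a, b]]); last by exists s1 => //=; rewrite in_itv /=.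
split.
- by exists s0 => //=; rewrite in_itv /=.
- by move=> _ [s /= hs <-]; apply: HT; move: hs; rewrite in_itv.
- apply: connected_continuous_connected.
    by apply/connected_intervalP; apply: interval_is_interval.
  exact: continuous_subspaceT.
Qed.

Lemma small_unit (R : realType) (A : 'M[R]_4) : exists s0 : rat, 0 < s0 /\
  forall r : R, 0 <= r <= ratr s0 -> (1%:M + r *: A) \in unitmx.
Proof.
pose q : {poly R} := \det (1%:M + 'X *: map_mx polyC A).
have qE r : q.[r] = \det (1%:M + r *: A).
  rewrite /q -horner_evalE -det_map_mx; congr (\det _); apply/matrixP => i j.
  rewrite !mxE /=; change (((i == j)%:R + 'X * (A i j)%:P).[r] = (i == j)%:R + r * A i j).
  by rewrite !hornerE; case: (i == j); rewrite ?mulr1n ?mulr0n ?hornerC.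
have : \forall r \near (0 : R), q.[r] != 0.
  apply: (@cvgr_neq0 R R^o R (nbhs (0:R)) _ (horner q) q.[0]); first exact: continuous_horner.
  by rewrite qE scale0r addr0 det1 oner_neq0.
case/nbhs_ballP => e e0 He.
pose n := Num.Def.trunc (e^-1).
exists (n.+1%:R^-1); split; first by rewrite invr_gt0 ltr0n.
move=> r /andP [r0 rs].
rewrite unitmxE unitfE -qE; apply: He.
rewrite /ball /= sub0r normrN ger0_norm //.
apply: (le_lt_trans rs); rewrite fmorphV rmorph_nat.
rewrite -(invrK e) ltf_pV2 ?posrE ?ltr0n ?invr_gt0 //.
exact: truncnS_gt.
Qed.
Local Open Scope ring_scope.
Section Grp.
Variables (R : realType) (T1 T2 : set 'M[R]_4) (Phi Psi : sdp R -> sdp R).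
Let G1 : set (sdp R) := [set g | T1 g.1].
Let G2 : set (sdp R) := [set g | T2 g.1].
Hypotheses (hT1u : forall X, T1 X -> X \in unitmx) (hT2u : forall X, T2 X -> X \in unitmx)
  (hT2c : forall X Y, T2 X -> T2 Y -> X *m Y = Y *m X)
  (hT1s : forall s : R, 2^-1 <= s <= 2 -> T1 s%:M)
  (hG : forall g, G1 g -> G2 (Phi g))
  (hom : forall g h, G1 g -> G1 h -> Phi (sdmul R g h) = sdmul R (Phi g) (Phi h))
  (hPsi : forall g, G1 g -> Psi (Phi g) = g).

Lemma hT1one : T1 1%:M.
Proof. by apply: hT1s; apply/andP; split; lra. Qed.

Lemma Phi_one : Phi (sdone R) = sdone R.
Proof.
have G1o : G1 (sdone R) by exact: hT1one.
have := hom G1o G1o.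
have -> : sdmul R (sdone R) (sdone R) = sdone R by rewrite /sdmul /sdone /= mul1mx mulmx0 addr0.
case E : (Phi (sdone R)) => [X v] [EX Ev].
have uX : X \in unitmx by have := hG G1o; rewrite E => /hT2u.
have X1 : X = 1%:M.
  by have := congr1 (mulmx (invmx X)) EX; rewrite mulmxA mulVmx // mul1mx => <-.
move: Ev; rewrite X1 mul1mx => /eqP; rewrite -subr_eq0 opprD addrA subrr sub0r oppr_eq0 => /eqP ->.
by [].
Qed.

Lemma Phi_inv_fst g g' : G1 g -> G1 g' -> sdmul R g g' = sdone R ->
  (Phi g).1 *m (Phi g').1 = 1%:M.
Proof. by move=> Gg Gg' E; have := hom Gg Gg'; rewrite E Phi_one => /(congr1 fst). Qed.

Definition L (x : 'cV[R]_4) : 'cV[R]_4 := (Phi (1%:M, x)).2.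

Lemma Phi_N x : Phi (1%:M, x) = (1%:M, L x).
Proof.
suff H1 : (Phi (1%:M, x)).1 = 1%:M by rewrite /L; case: (Phi (1%:M, x)) H1 => [a v] /= ->.
have two0 : (2 : R) != 0 by rewrite pnatr_eq0.
pose g : sdp R := (2%:M, 0). pose g' : sdp R := (2^-1%:M, 0).
pose h : sdp R := (1%:M, x). pose h' : sdp R := (1%:M, - x).
have Gg : G1 g by apply: hT1s; apply/andP; split; lra.
have Gg' : G1 g' by apply: hT1s; apply/andP; split; lra.
have Gh : G1 h by exact: hT1one.
have Gh' : G1 h' by exact: hT1one.
have gg' : sdmul R g g' = sdone R.
  by rewrite /sdmul /sdone /= -scalar_mxM mulfV // mulmx0 addr0.
have hh' : sdmul R h h' = sdone R.
  by rewrite /sdmul /sdone /= mul1mx mul1mx subrr.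
have E : sdmul R (sdmul R (sdmul R g h) g') h' = (1%:M, x).
  rewrite /sdmul /= !mulmx1 mulmx0 addr0 add0r -scalar_mxM mulfV // mul1mx.
  by rewrite mul_scalar_mx scaler_nat mulr2n addrK.
have Ggh : G1 (sdmul R g h) by rewrite /G1 /= mulmx1.
have Gghg : G1 (sdmul R (sdmul R g h) g').
  by rewrite /G1 /= mulmx1 -scalar_mxM mulfV //; exact: hT1one.
have := hom Gghg Gh'; rewrite E => ->; rewrite (hom Ggh Gg') (hom Gg Gh).
case Pg : (Phi g) => [a c]; case Ph : (Phi h) => [b d].
case Pg' : (Phi g') => [a' c']; case Ph' : (Phi h') => [b' d'].
have aa' : a *m a' = 1%:M by have := Phi_inv_fst Gg Gg' gg'; rewrite Pg Pg'.
have bb' : b *m b' = 1%:M by have := Phi_inv_fst Gh Gh' hh'; rewrite Ph Ph'.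
have T2b : T2 b by have := hG Gh; rewrite Ph.
have T2a' : T2 a' by have := hG Gg'; rewrite Pg'.
rewrite /sdmul /=.
by rewrite -(mulmxA a) (hT2c T2b T2a') mulmxA aa' mul1mx bb'.
Qed.

Lemma L_add x y : L (x + y) = L x + L y.
Proof.
have Gx : G1 (1%:M, x) by exact: hT1one.
have Gy : G1 (1%:M, y) by exact: hT1one.
have := hom Gx Gy; rewrite /sdmul /= mul1mx mul1mx !Phi_N /= mul1mx.
by rewrite mul1mx; case.
Qed.

Lemma L0 : L 0 = 0.
Proof. by have := Phi_N 0; rewrite -[(1%:M, 0)]/(sdone R) Phi_one; case. Qed.

Lemma LN x : L (- x) = - L x.
Proof. by apply/eqP; rewrite -subr_eq0 opprK addrC -L_add subrr L0. Qed.

Lemma L_inj x : L x = 0 -> x = 0.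
Proof.
move=> Lx; have Gx : G1 (1%:M, x) by exact: hT1one.
have G0 : G1 (sdone R) by exact: hT1one.
have := hPsi Gx; rewrite Phi_N Lx -[(1%:M, 0)]/(sdone R) -Phi_one hPsi //.
by case.
Qed.

Lemma L_conj g x : G1 g -> L (g.1 *m x) = (Phi g).1 *m L x.
Proof.
move=> Gg; have Gx : G1 (1%:M, x) by exact: hT1one.
have Gy : G1 (1%:M, g.1 *m x) by exact: hT1one.
have E : sdmul R g (1%:M, x) = sdmul R (1%:M, g.1 *m x) g.
  by rewrite /sdmul /= mulmx1 mul1mx mul1mx addrC.
have := congr1 Phi E; rewrite hom // hom // !Phi_N /sdmul /= mulmx1 mul1mx => [[]].
move=> H; apply: (addIr (Phi g).2); by rewrite [RHS]addrC H mul1mx.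
Qed.

Lemma L_muln x n : L (x *+ n) = L x *+ n.
Proof. by elim: n => [|n IH]; rewrite ?mulr0n ?L0 // !mulrS L_add IH. Qed.

Lemma L_mulz x (z : int) : L (x *~ z) = L x *~ z.
Proof.
case: z => n; first exact: L_muln.
by rewrite !NegzE !mulrNz LN; congr (- _); apply: L_muln.
Qed.

Lemma L_rat (q : rat) x : L (ratr q *: x) = ratr q *: L x.
Proof.
have d0 : ((denq q)%:~R : R) != 0 by rewrite intr_eq0 denq_neq0.
have dq : ((denq q)%:~R : R) * ratr q = (numq q)%:~R.
  have -> : ratr q = ((numq q)%:~R : R) / (denq q)%:~R.
    by rewrite -{1}(divq_num_den q) fmorph_div !rmorph_int.
  by rewrite mulrC divfK.
apply: (scalerI d0).
rewrite [LHS]scaler_int -L_mulz -scaler_int scalerA dq scaler_int L_mulz.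
by rewrite scalerA dq scaler_int.
Qed.

End Grp.
Lemma pigeon (R : realType) (Gam Gam' : set (sdp R)) :
  is_subgroup R Gam Gam' -> finite_index R Gam Gam' ->
  (forall v, int_vec R v -> Gam (1%:M, v)) -> (forall g, Gam g -> g.1 \in unitmx) ->
  forall j : 'I_4, exists2 d : int, d != 0 & Gam' (1%:M, d%:~R *: delta_mx j 0).
Proof.
move=> [_ _ HM HV] [n [x [Hx Hcov]]] Hint Hu j.
pose g (k : 'I_n.+1) : sdp R := (1%:M, (k : nat)%:R *: delta_mx j 0).
have Gg k : Gam (g k).
  apply: Hint => i; exists ((k : nat)%:Z * (i == j)%:Z); rewrite !mxE.
  by rewrite intrM; case: (i == j); rewrite /= ?mulr1 ?mulr0.
have : forall k, exists i, exists2 h, Gam' h & g k = sdmul R (x i) h.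
  by move=> k; apply: Hcov; apply: Gg.
case/fin_all_exists => f Hf.
have : ~~ injectiveb f.
  apply/negP => /injectiveP inj; have := leq_card f inj.
  by rewrite !card_ord ltnn.
case/injectivePn => k [k' kk' fk].
have [h Gh Eh] := Hf k; have [h' Gh' Eh'] := Hf k'.
rewrite -fk in Eh'; set X := x (f k) in Eh Eh'.
have uX : X.1 \in unitmx by apply: Hu; apply: Hx.
have h1 : h.1 = invmx X.1.
  have := congr1 fst Eh => /= /(congr1 (mulmx (invmx X.1))).
  by rewrite mulmx1 mulmxA mulVmx // mul1mx.
have h1' : h'.1 = invmx X.1.
  have := congr1 fst Eh' => /= /(congr1 (mulmx (invmx X.1))).
  by rewrite mulmx1 mulmxA mulVmx // mul1mx.
exists ((k' : nat)%:Z - (k : nat)%:Z).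
  by rewrite subr_eq0 eq_sym; apply: contra kk' => /eqP [] /val_inj ->.
have -> : (1%:M, ((k' : nat)%:Z - (k : nat)%:Z)%:~R *: delta_mx j 0) =
    sdmul R (sdinv R h) h'.
  rewrite /sdmul /sdinv /= h1 h1' invmxK mulmxV //; congr (_, _).
  have E2 := congr1 snd Eh; have E2' := congr1 snd Eh'; rewrite /= in E2 E2'.
  have -> : X.1 *m h'.2 = k'%:R *: delta_mx j 0 - X.2 by rewrite E2' [X.2 + _]addrC addrK.
  have -> : X.1 *m h.2 = k%:R *: delta_mx j 0 - X.2 by rewrite E2 [X.2 + _]addrC addrK.
  by rewrite intrB !pmulrn scalerBl opprB [RHS]addrC addrA subrK.
by apply: HM => //; apply: HV.
Qed.
Lemma rat_matrix (R : realType) (L : 'cV[R]_4 -> 'cV[R]_4) :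
  (forall x y, L (x + y) = L x + L y) -> (forall q x, L (ratr q *: x) = ratr q *: L x) ->
  (forall j : 'I_4, exists2 d : int, d != 0 & int_vec R (L (d%:~R *: delta_mx j 0))) ->
  exists P : 'M[rat]_4, forall v : 'cV[rat]_4, L (map_mx ratr v) = mxR R P *m map_mx ratr v.
Proof.
move=> LD LZ Hd.
have L0 : L 0 = 0.
  by have := LD 0 0; rewrite addr0 => /(congr1 (fun y => y - L 0)); rewrite subrr addrK.
have Q : forall j i : 'I_4, exists q : rat, L (delta_mx j 0) i 0 = ratr q.
  move=> j i; have [d d0 Hz] := Hd j; move: Hz.
  have -> : (d%:~R : R) *: delta_mx j 0 = ratr (d%:~R : rat) *: delta_mx j 0 by rewrite rmorph_int.
  move=> /(_ i) [z Hz]; rewrite LZ mxE rmorph_int in Hz.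
  exists (z%:~R / d%:~R); rewrite fmorph_div !rmorph_int -Hz mulrC mulKf //.
  by rewrite intr_eq0.
have [Qf HQ] : exists Qf : 'I_4 -> 'I_4 -> rat, forall j i, L (delta_mx j 0) i 0 = ratr (Qf j i).
  have H1 : forall j : 'I_4, exists f : 'I_4 -> rat, forall i, L (delta_mx j 0) i 0 = ratr (f i).
    by move=> j; exact: fin_all_exists (Q j).
  exact: fin_all_exists H1.
exists (\matrix_(i, j) Qf j i) => v.
have vE : map_mx ratr v = \sum_j ratr (v j 0) *: (delta_mx j 0 : 'cV[R]_4).
  apply/matrixP => i k; rewrite (ord1 k) summxE !mxE (bigD1 i) //= big1 ?addr0.
    by rewrite !mxE !eqxx mulr1.
  by move=> j ji; rewrite !mxE eq_sym (negbTE ji) mulr0.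
rewrite vE (big_morph L LD L0) -vE; apply/matrixP => i k; rewrite (ord1 k) summxE !mxE.
by apply: eq_bigr => j _; rewrite !mxE LZ mxE HQ mulrC.
Qed.

Lemma Ttilde_lin2 (R : realType) (M : 'I_4 -> 'M[rat]_4) (a r : R) :
  M 0 = 1%:M -> (a *: 1%:M + r *: mxR R (M 1)) \in unitmx ->
  Ttilde R M (a *: 1%:M + r *: mxR R (M 1)).
Proof.
move=> M0 u; split => //.
exists (fun k : 'I_4 => if k == 0 then a else if k == 1 then r else 0).
rewrite (bigD1 0) //= (bigD1 1) //= big1 ?addr0.
  by rewrite /mxR M0 map_mx1.
move=> k /andP [k0 k1]; by rewrite (negbTE k0) (negbTE k1) scale0r.
Qed.

Lemma Tid_scal (R : realType) (M : 'I_4 -> 'M[rat]_4) :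
  M 0 = 1%:M -> forall s : R, 2^-1 <= s <= 2 -> Tid R M s%:M.
Proof.
move=> M0 s hs.
have -> : s%:M = s *: 1%:M + 0 *: mxR R (M 1) by rewrite scale0r addr0 scalemx1.
apply: (@tid_of_path R M (fun r => r *: 1%:M + 0 *: mxR R (M 1)) (2^-1) 2 1 s).
- move=> x; apply: cvgD; last exact: cvg_cst.
  by apply: cvgZl; exact: cvg_id.
- by apply/andP; split; lra.
- exact: hs.
- by rewrite scale0r addr0 scale1r.
- move=> r /andP [r1 r2]; apply: Ttilde_lin2 => //.
  rewrite scale0r addr0 unitmxZ ?unitmx1 // unitfE; apply/eqP => r0.
  by move: r1; rewrite r0; lra.
Qed.

Lemma Tid_t (R : realType) (M : 'I_4 -> 'M[rat]_4) (s0 : rat) :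
  M 0 = 1%:M -> 0 < s0 ->
  (forall r : R, 0 <= r <= ratr s0 -> (1%:M + r *: mxR R (M 1)) \in unitmx) ->
  Tid R M (1 *: 1%:M + ratr s0 *: mxR R (M 1)).
Proof.
move=> M0 s0p hu.
have s0p' : (0 : R) <= ratr s0 by rewrite ler0q ltW.
apply: (@tid_of_path R M (fun r => 1 *: 1%:M + r *: mxR R (M 1)) 0 (ratr s0) 0).
- move=> x; apply: cvgD; first exact: cvg_cst.
  by apply: cvgZl; exact: cvg_id.
- by rewrite lexx.
- by rewrite lexx andbT.
- by rewrite scale0r addr0 scale1r.
- move=> r hr; apply: Ttilde_lin2 => //; rewrite scale1r; exact: hu.
Qed.

Lemma span_comm (R : realType) (M : 'I_4 -> 'M[rat]_4) X Y :
  (forall j k, M j *m M k = M k *m M j) ->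
  Ttilde R M X -> Ttilde R M Y -> X *m Y = Y *m X.
Proof.
move=> Mc [[c ->] _] [[d ->] _].
have H j : mxR R (M j) *m (\sum_k d k *: mxR R (M k)) = (\sum_k d k *: mxR R (M k)) *m mxR R (M j).
  rewrite mulmx_sumr mulmx_suml; apply: eq_bigr => k _.
  by rewrite -scalemxAr -scalemxAl /mxR -!map_mxM Mc.
rewrite mulmx_suml mulmx_sumr; apply: eq_bigr => j _.
by rewrite -scalemxAl -scalemxAr H.
Qed.

Lemma peval4 (a : 'I_4 -> rat) x :
  pevalC (\poly_(i < 4) a (inord i)) x = \sum_i ratr (a i) * x ^+ i.
Proof.
rewrite /pevalC (@horner_coef_wide _ 4).
  by apply: eq_bigr => i _; rewrite coef_map coef_poly ltn_ord inord_val.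
by rewrite size_map_poly; apply: size_poly.
Qed.

Unset Implicit Arguments.
Set Strict Implicit.
Theorem lemma3p2 (R : realType)
  (p1 p2 : {poly rat}) (u1 u2 : algC) (b1 b2 : 'I_4 -> algC)
  (M1 M2 : 'I_4 -> 'M[rat]_4) (e1 e2 : 'I_3 -> algC) (A1 A2 : 'I_3 -> 'M[rat]_4) :
  field_data p1 u1 b1 M1 e1 A1 ->
  field_data p2 u2 b2 M2 e2 A2 ->
  commensurable R (GT R M1) (Gamma R M1 A1) (GT R M2) (Gamma R M2 A2) ->
  fields_isomorphic (splitting_fieldC p1) (splitting_fieldC p2).
Proof.
move=> [[tr1 zb1] Mm1 _ _ _] [[tr2 zb2] Mm2 _ _ _].
move=> [G1' [G2' [Phi [[sg1 fi1] sg2 fi2 [PhG Phom _ [Psi [_ PsiPhi _ _]]] PhiIm]]]].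
case: tr1 => _ ip1 sp1 r1 _; case: tr2 => _ ip2 sp2 r2 _.
have M10 : M1 0 = 1%:M.
  have := Mm1 0; rewrite /= expr0 => H; exact: (mm_unique zb1 H (mm_one b1)).
have M20 : M2 0 = 1%:M.
  have := Mm2 0; rewrite /= expr0 => H; exact: (mm_unique zb2 H (mm_one b2)).
have M11 : is_mult_matrix b1 u1 (M1 1) by have := Mm1 1; rewrite /= expr1.
have M2c j k : M2 j *m M2 k = M2 k *m M2 j.
  apply: (mm_unique zb2 (mm_mul (Mm2 j) (Mm2 k))); rewrite mulrC; exact: mm_mul.
have hT1s := @Tid_scal R M1 M10.
have hT1u X : Tid R M1 X -> X \in unitmx by move/connected_component_sub => [].
have hT2u X : Tid R M2 X -> X \in unitmx by move/connected_component_sub => [].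
have hT2c X Y : Tid R M2 X -> Tid R M2 Y -> X *m Y = Y *m X.
  move=> /connected_component_sub HX /connected_component_sub HY.
  exact: span_comm M2c HX HY.
have hT1one : Tid R M1 1%:M by apply: hT1s; apply/andP; split; lra.
have PN x : Phi (1%:M, x) = (1%:M, L Phi x) := Phi_N hT2u hT2c hT1s PhG Phom x.
have LD := L_add hT2u hT2c hT1s PhG Phom.
have LZ := L_rat hT2u hT2c hT1s PhG Phom.
have Linj := L_inj hT2u hT2c hT1s PhG Phom PsiPhi.
have Hint : forall v, int_vec R v -> Gamma R M1 A1 (1%:M, v).
  move=> v hv; split => //; split; first exact: hT1one.
  by move=> H [_ H1 _ _] _.
have Hu : forall g, Gamma R M1 A1 g -> g.1 \in unitmx by move=> g [[/hT1u]].
have Hd j : exists2 d : int, d != 0 & int_vec R (L Phi (d%:~R *: delta_mx j 0)).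
  have [d d0 Gd] := pigeon sg1 fi1 Hint Hu j.
  exists d => //.
  have : G2' (Phi (1%:M, d%:~R *: delta_mx j 0)) by rewrite -PhiIm; exists (1%:M, d%:~R *: delta_mx j 0).
  by case: sg2 => sub _ _ _ => /sub; rewrite PN => [[_ ]].
have [P HP] := rat_matrix LD LZ Hd.
have Pu : P \in unitmx.
  apply: contraT; rewrite unitmxE unitfE negbK -det_tr => /det0P [w w0 wP].
  suff : w^T = 0 by move/(congr1 trmx); rewrite trmxK trmx0 => w00; rewrite w00 eqxx in w0.
  apply: (@map_mx_inj _ _ (ratr : {rmorphism rat -> R})); rewrite map_mx0.
  apply: Linj; rewrite HP /mxR -map_mxM.
  by rewrite -[P]trmxK -trmx_mul wP trmx0 map_mx0.
have [s0 [s0p hs0]] := small_unit (mxR R (M1 1)).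
pose T : 'M[rat]_4 := 1%:M + s0 *: M1 1.
have mxRT : mxR R T = 1 *: 1%:M + ratr s0 *: mxR R (M1 1).
  by rewrite /mxR /T map_mxD map_mxZ map_mx1 scale1r.
have TT : Tid R M1 (mxR R T) by rewrite mxRT; apply: Tid_t.
pose g : sdp R := (mxR R T, 0).
have Gg : GT R M1 g := TT.
pose a := (Phi g).1.
have conj x : L Phi (mxR R T *m x) = a *m L Phi x := L_conj hT2u hT2c hT1s PhG Phom x Gg.
have aE : a *m mxR R P = mxR R (P *m T).
  apply/matrixP => i j.
  have := conj (delta_mx j 0).
  rewrite -(map_delta_mx (ratr : {rmorphism rat -> R})) /mxR -map_mxM !HP.
  rewrite map_mxM mulmxA -!/(mxR R _) => /(congr1 (fun v : 'cV[R]_4 => v i 0)).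
  by rewrite map_delta_mx mulmxA -!colE /mxR map_mxM !mxE => ->.
have aE' : a = mxR R (P *m T *m invmx P).
  rewrite /mxR map_mxM map_invmx -/(mxR R (P *m T)) -aE -mulmxA mulmxV ?mulmx1 //.
  by rewrite map_unitmx.
have Ta : Tid R M2 a := PhG g Gg.
have [[c ac] _] := connected_component_sub Ta.
rewrite aE' in ac.
have [c' Zc] := rat_in_span ac.
pose Z := P *m T *m invmx P.
pose x1 := 1 + ratr s0 * u1.
pose x2 := \sum_k ratr (c' k) * u2 ^+ k.
have mT : is_mult_matrix b1 x1 T := mm_add (mm_one b1) (mm_scale s0 M11).
have mZ : is_mult_matrix b2 x2 Z.
  rewrite /Z Zc; apply: mm_sum => k; apply: mm_scale; exact: Mm2.
have transfer f : pevalC f x1 = 0 -> pevalC f x2 = 0.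
  move/(mm_poly0 zb1 f mT) => H; apply/(mm_poly0 zb2 f mZ).
  by rewrite /Z horner_mx_uconj // H mulmx0 mul0mx.
have s00 : s0 != 0 by rewrite gt_eqF.
pose r : {poly rat} := (s0^-1)%:P * ('X - 1).
have rx1 : pevalC r x1 = u1.
  rewrite pevalCM pevalCC pevalCB pevalCX -[1 : {poly rat}]polyC1 pevalCC rmorph1.
  by rewrite /x1 [1 + _]addrC addrK mulrA -rmorphM mulVf // rmorph1 mul1r.
have hy : pevalC (p1 \Po r) x2 = 0.
  by apply: transfer; rewrite pevalC_comp rx1; exact/rootP.
pose w := \poly_(k < 4) c' (inord k).
have wE : x2 = pevalC w u2 by rewrite peval4.
have ry : root (map_poly ratr p1) (pevalC (r \Po w) u2).
  apply/rootP; change (pevalC p1 (pevalC (r \Po w) u2) = 0).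
  by rewrite pevalC_comp -wE -pevalC_comp.
have [h hE] := find_inverse ip1 sp1 r2 sp2 ry.
have E := split_eq ip1 ip2 ry r2 erefl hE.
rewrite E; exists id; split => //.
- by move=> y Fy; exists y.
Qed.
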